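(* Let $f:\mathbb{R}^{N}\rightarrow (-\infty ,\infty ]$ with $m_{f}:=\inf f>-\infty$, and suppose there are constants $c>0$ and $\alpha>0$ such that $f(x)\geq h(x):=c|x|^{\alpha }$ for $|x|$ large enough. Then for every $z<m_{f}$, every open ball $B$ centered at the origin such that $f\geq h\geq 2z$ outside $B$, and every Young function $\phi$, $$\|(\check{f}-z)^{-1}\|_{\phi }\leq 2\|h^{-1}\|_{\phi ,\mathbb{R}^{N}\setminus B}+(m_{f}-z)^{-1}\|\chi_{B}\|_{\phi }.$$ If $\phi$ is invertible with inverse $\psi$, this also reads $$\|(\check{f}-z)^{-1}\|_{\phi }\leq 2\|h^{-1}\|_{\phi ,\mathbb{R}^{N}\setminus B}+(m_{f}-z)^{-1}[\psi(\mu_{N}(B)^{-1})]^{-1}.$$ In particular, if $\|h^{-1}\|_{\phi,\mathbb{R}^{N}\setminus B}<\infty$, then $\|(\check{f}-z)^{-1}\|_\phi<\infty$.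
   Context: $\mu_N$ is Lebesgue measure, $\chi_B$ the indicator function of $B$. For $k\ge0$, $k^{-1}:=1/k$ (with $1/0=\infty$). A Young function is a nonconstant $\phi:[0,\infty]\to[0,\infty]$ with $\phi(0)=0$, nondecreasing, convex and left continuous; for measurable $k$ on a measurable set $E\subset\mathbb{R}^N$, $\|k\|_{\phi,E}:=\inf\{r>0:\int_{E}\phi(r^{-1}|k|)\le 1\}$ ($=\infty$ if no such $r$), and $\|k\|_\phi:=\|k\|_{\phi,\mathbb{R}^N}$. Enclosing balls: for nonempty bounded $X\subset\mathbb{R}^N$, $\overline{B}_X$ is the unique closed ball of minimal diameter containing $X$; $\overline{B}_X:=\mathbb{R}^N$ if $X$ unbounded; $\overline{B}_\emptyset:=\{0\}$. For $f:\mathbb{R}^N\to[-\infty,\infty]$, $\rho^-_f(\xi)\in[0,\infty]$ is the radius of $\overline{B}_{\{f<\xi\}}$, $\gamma^-_f(t):=\sup\{\xi:\rho^-_f(\xi)\le t\}$ for $t\ge0$, and $\check f(x):=\gamma^-_f(|x|)$. *)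

(* Defs.v *)
From HB Require Import structures.
From mathcomp Require Import all_boot all_order all_algebra.
From mathcomp Require Import all_classical all_reals all_analysis.
Set Implicit Arguments.
Unset Strict Implicit.
Unset Printing Implicit Defensive.
Import Order.TTheory GRing.Theory Num.Theory.
Local Open Scope classical_set_scope.
Local Open Scope ring_scope.

Definition Rdisp (R : realType) : measure_display :=
  ltac:(let t := type of (measurableTypeR R : measurableType _) in
        match t with measurableType ?d => exact d end).

(** R^n, realised as the iterated product (((tt, x_1), x_2), ..., x_n)
    equipped with the product (Borel) sigma-algebra. *)
Fixpoint RNdisp (R : realType) (n : nat) : measure_display :=
  match n with
  | 0 => default_measure_display
  | n.+1 => (RNdisp R n, Rdisp R).-prod
  end.

Fixpoint RN (R : realType) (n : nat) : measurableType (RNdisp R n) :=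
  match n return measurableType (RNdisp R n) with
  | 0 => unit
  | n.+1 => (RN R n * measurableTypeR R)%type
  end.

Fixpoint lebN (R : realType) (n : nat) : {measure set (RN R n) -> \bar R} :=
  match n return {measure set (RN R n) -> \bar R} with
  | 0 => @dirac _ unit tt R
  | n.+1 => ((@lebN R n) \x (@lebesgue_measure R))%E
  end.

Fixpoint sqnorm (R : realType) (n : nat) : RN R n -> R :=
  match n return RN R n -> R with
  | 0 => fun _ => 0
  | n.+1 => fun x => sqnorm x.1 + x.2 ^+ 2
  end.

Fixpoint sqdist (R : realType) (n : nat) : RN R n -> RN R n -> R :=
  match n return RN R n -> RN R n -> R with
  | 0 => fun _ _ => 0
  | n.+1 => fun x y => sqdist x.1 y.1 + (x.2 - y.2) ^+ 2
  end.

Definition enorm (R : realType) (n : nat) (x : RN R n) : R := Num.sqrt (sqnorm x).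
Definition edist (R : realType) (n : nat) (x y : RN R n) : R := Num.sqrt (sqdist x y).

Local Open Scope ereal_scope.

(** k^{-1} := 1/k for k in [0, +oo], with 1/0 = +oo and 1/(+oo) = 0
    (the value at negative arguments is irrelevant). *)
Definition einv (R : realType) (k : \bar R) : \bar R :=
  match k with
  | r%:E => if r == 0%R then +oo else (r^-1)%:E
  | +oo => 0
  | -oo => 0
  end.

(** Young functions phi : [0,+oo] -> [0,+oo] (modelled on \bar R; only the
    values on [0,+oo] matter). *)
Definition young (R : realType) (phi : \bar R -> \bar R) : Prop :=
  phi 0 = 0 /\
  [/\
      (exists s t : \bar R, [/\ 0 <= s, 0 <= t & phi s <> phi t]),
      (forall t : \bar R, 0 <= t -> 0 <= phi t),
      (forall s t : \bar R, 0 <= s -> s <= t -> phi s <= phi t),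
      (forall (s t : \bar R) (l : R), 0 <= s -> 0 <= t -> (0 <= l <= 1)%R ->
         phi (l%:E * s + (1 - l)%:E * t) <= l%:E * phi s + (1 - l)%:E * phi t)
    &
      (forall t : \bar R, 0 < t ->
         phi x @[x --> within (fun u => u < t) (nbhs t)] --> phi t)].

Definition lux (R : realType) (n : nat) (phi : \bar R -> \bar R)
    (E : set (RN R n)) (k : RN R n -> \bar R) : \bar R :=
  ereal_inf [set r%:E | r in [set r : R | (0 < r)%R /\
     \int[lebN R n]_(x in E) phi ((r^-1)%:E * `|k x|) <= 1]].

(** Closed Euclidean ball and radius of the minimal enclosing closed ball
    \overline{B}_X : the minimal radius of a closed ball containing X; this is
    +oo when X is unbounded (\overline{B}_X = R^n) and 0 when X is empty
    (\overline{B}_X = {0}). *)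
Definition cball (R : realType) (n : nat) (c : RN R n) (r : R) : set (RN R n) :=
  [set y | (edist y c <= r)%R].

Definition encl_radius (R : realType) (n : nat) (X : set (RN R n)) : \bar R :=
  ereal_inf [set r%:E | r in [set r : R | (0 <= r)%R /\
     exists c : RN R n, X `<=` cball c r]].

Definition rho_minus (R : realType) (n : nat) (f : RN R n -> \bar R)
    (xi : \bar R) : \bar R :=
  encl_radius [set x | f x < xi].

Definition gamma_minus (R : realType) (n : nat) (f : RN R n -> \bar R)
    (t : R) : \bar R :=
  ereal_sup [set xi : \bar R | rho_minus f xi <= t%:E].

Definition fcheck (R : realType) (n : nat) (f : RN R n -> \bar R)
    (x : RN R n) : \bar R :=
  gamma_minus f (enorm x).

(* Main.v *)
Set Warnings "-all".
Require Import Defs.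
From HB Require Import structures.
From mathcomp Require Import all_boot all_order all_algebra.
From mathcomp Require Import all_classical all_reals all_analysis.
From mathcomp Require Import measurable_realfun.
From mathcomp Require Import ring lra.
Import Order.TTheory GRing.Theory Num.Theory.
Local Open Scope classical_set_scope.
Local Open Scope ring_scope.

Local Open Scope ereal_scope.
Section inner.
Context d (T : measurableType d) (R : realType) (mu : {measure set T -> \bar R}).
Import HBNNSimple.

Lemma int_mono (D E : set T) (f g : T -> \bar R) :
  (forall x, D x -> 0 <= f x) -> (forall x, E x -> 0 <= g x) ->
  (forall x, D x -> E x /\ f x <= g x) ->
  \int[mu]_(x in D) f x <= \int[mu]_(x in E) g x.
Proof.
move=> f0 g0 fg; rewrite (@ge0_integralE _ _ _ mu D f f0) (@ge0_integralE _ _ _ mu E g g0).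
apply: ge_ereal_sup => _ [s hs <-]; apply: ereal_sup_ubound; exists s => //= x.
apply: (le_trans (hs x)); rewrite /patch; case: ifPn => //.
  rewrite inE => /fg [Ex fgx]; rewrite ifT ?inE //.
move=> _; case: ifPn => [|_]; last by [].
by rewrite inE => /g0.
Qed.

Lemma sint_part (A : set T) (mA : measurable A) (s : {nnsfun T >-> R})
  (g1 : T -> \bar R) (l : R) : (0 < l)%R ->
  (forall x, A x -> 0 <= g1 x) ->
  (forall x, A x -> (s x)%:E <= l%:E * g1 x) ->
  sintegral mu (proj_nnsfun s mA) <= l%:E * \int[mu]_(x in A) g1 x.
Proof.
move=> l0 g10 sg.
have il0 : (0 <= l^-1)%R by rewrite invr_ge0 ltW.
have -> : sintegral mu (proj_nnsfun s mA) =
   sintegral mu (cst l \* (scale_nnsfun (proj_nnsfun s mA) il0))%R.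
  apply: eq_sintegral => x /=; by rewrite mulrA mulfV ?gt_eqF // mul1r.
rewrite sintegralrM; apply: lee_wpmul2l; first by rewrite lee_fin ltW.
rewrite (@ge0_integralE _ _ _ mu A g1 g10).
apply: ereal_sup_ubound; exists (scale_nnsfun (proj_nnsfun s mA) il0) => //= x.
rewrite /patch /measurable_realfun.mindic indicE; case: ifPn => xA.
  rewrite mulr1 EFinM lee_pdivrMl //; apply: sg; by rewrite -inE.
by rewrite mulr0 mulr0.
Qed.

Lemma int_split (A : set T) (mA : measurable A) (F g1 g2 : T -> \bar R) (l m : R) :
 (0 < l)%R -> (0 < m)%R -> (forall x, 0 <= F x) ->
 (forall x, A x -> 0 <= g1 x) -> (forall x, (~` A) x -> 0 <= g2 x) ->
 (forall x, A x -> F x <= l%:E * g1 x) -> (forall x, (~` A) x -> F x <= m%:E * g2 x) ->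
 \int[mu]_x F x <= l%:E * \int[mu]_(x in A) g1 x + m%:E * \int[mu]_(x in ~` A) g2 x.
Proof.
move=> l0 m0 F0 g10 g20 Fg1 Fg2.
have mAc : measurable (~` A) by exact: measurableC.
rewrite (@ge0_integralE _ _ _ mu setT F (fun x _ => F0 x)).
apply: ge_ereal_sup => _ [s hs <-].
have hs' : forall x, (s x)%:E <= F x.
  by move=> x; have := hs x; rewrite /patch ifT // inE.
have -> : sintegral mu s = sintegral mu (proj_nnsfun s mA) + sintegral mu (proj_nnsfun s mAc).
  rewrite -sintegralD; apply: eq_sintegral => x /=.
  rewrite /measurable_realfun.mindic !indicE.
  have [xA|xA] := pselect (A x).
    rewrite mem_set // memNset /=; last by move/(_ xA).
    by rewrite mulr1 mulr0 addr0.
  rewrite memNset // mem_set //= mulr1 mulr0 add0r //.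
apply: leeD.
  apply: sint_part => // x Ax; exact: le_trans (hs' x) (Fg1 x Ax).
apply: sint_part => // x Ax; exact: le_trans (hs' x) (Fg2 x Ax).
Qed.

End inner.

Local Open Scope ring_scope.
Section geom.
Context (R : realType).

Fixpoint zRN (n : nat) : RN R n :=
  match n return RN R n with 0 => tt | n.+1 => (zRN n, 0%R) end.

Lemma sqdist0 n (y : RN R n) : sqdist y (zRN n) = sqnorm y.
Proof. elim: n y => [//|n IH] [y t] /=; by rewrite IH subr0. Qed.

Lemma sqnorm_ge0 n (y : RN R n) : 0 <= sqnorm y.
Proof. elim: n y => [[]|n IH [y t]] /=; first by []. by rewrite addr_ge0 ?sqr_ge0. Qed.

Lemma measurable_sqnorm n : measurable_fun setT (@sqnorm R n).
Proof.
elim: n => [|n IH] /=; first exact: measurable_cst.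
apply: measurable_funD.
  exact: measurableT_comp IH measurable_fst.
exact: measurable_funX measurable_snd.
Qed.

Lemma measurable_enorm n : measurable_fun setT (@enorm R n).
Proof.
apply: measurableT_comp (measurable_sqnorm n).
exact: continuous_measurable_fun (@sqrt_continuous R).
Qed.

Fixpoint boxN (n : nat) (a b : R) : set (RN R n) :=
  match n return set (RN R n) with 0 => setT | n.+1 => boxN n a b `*` `[a, b] end.

Lemma measurable_boxN n a b : measurable (boxN n a b).
Proof.
elim: n => [|n IH] /=; first exact: measurableT.
apply: measurableX => //; exact: measurable_itv.
Qed.

Lemma lebN_boxN n a b : a <= b -> lebN R n (boxN n a b) = ((b - a) ^+ n)%:E.
Proof.
move=> ab; elim: n => [|n IH] /=.
  by rewrite diracE in_setT.
rewrite (@product_measure1E _ _ _ _ R (lebN R n) lebesgue_measure (boxN n a b) `[a, b]).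
  have := @lebesgue_measure_itv R `[a, b]; rewrite /= lte_fin => E.
  rewrite IH E.
  move: ab; rewrite le_eqVlt => /orP [/eqP ->|ab].
    by rewrite ltxx mule0 subrr expr0n.
  by rewrite ab -EFinB -EFinM exprSr.
- exact: measurable_boxN.
- exact: measurable_itv.
Qed.

End geom.

Section fch.
Context (R : realType).



Lemma enorm_ge0 n (x : RN R n) : 0 <= enorm x.
Proof. exact: sqrtr_ge0. Qed.

Local Open Scope ereal_scope.

Lemma encl_radius_le n (X : set (RN R n)) (c : RN R n) (t : R) :
  (0 <= t)%R -> X `<=` cball c t -> encl_radius X <= t%:E.
Proof. move=> t0 Xc; apply: ereal_inf_lbound; exists t => //; split => //; by exists c. Qed.

Lemma fcheck_ge_mf n (f : RN R n -> \bar R) x :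
  ereal_inf (range f) <= fcheck f x.
Proof.
apply: ereal_sup_ubound; rewrite /rho_minus /=.
apply: (@encl_radius_le _ _ x); first exact: enorm_ge0.
move=> y /= fy; exfalso; move: fy; apply/negP; rewrite -leNgt.
by apply: ereal_inf_lbound; exists y.
Qed.

Lemma fcheck_ge_h n (f : RN R n -> \bar R) (c alpha r : R) x :
  (0 < c)%R -> (0 < alpha)%R ->
  (forall y, ~ (enorm y < r)%R -> (c * enorm y `^ alpha)%:E <= f y) ->
  (r <= enorm x)%R -> (c * enorm x `^ alpha)%:E <= fcheck f x.
Proof.
move=> c0 a0 hf rx; apply: ereal_sup_ubound; rewrite /rho_minus /=.
apply: (@encl_radius_le _ _ (zRN R n)); first exact: enorm_ge0.
move=> y /= fy; rewrite /cball /Defs.edist /= sqdist0 -/(enorm y).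
have [yr|yr] := pselect (enorm y < r)%R; first by rewrite ltW // (lt_le_trans yr).
have := le_lt_trans (hf y yr) fy; rewrite lte_fin ltr_pM2l // => hlt.
rewrite leNgt; apply/negP => xy; move: hlt; apply/negP; rewrite -leNgt.
by apply: ge0_ler_powR; rewrite ?ltW //= nnegrE enorm_ge0.
Qed.

End fch.

Local Open Scope ring_scope.
Section geom2.
Context (R : realType).


Lemma enorm_sq n (x : RN R n) : enorm x ^+ 2 = sqnorm x.
Proof. by rewrite /enorm sqr_sqrtr // sqnorm_ge0. Qed.

Lemma enorm_lt n (x : RN R n) (r : R) : 0 <= r -> (enorm x < r) = (sqnorm x < r ^+ 2).
Proof.
move=> r0; have e0 : 0 <= enorm x by exact: sqrtr_ge0.
rewrite -enorm_sq; apply/idP/idP => h; first nra.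
rewrite ltNge; apply/negP => h'; nra.
Qed.


Lemma sqnorm_boxN n d (x : RN R n) : 0 <= d -> boxN R n 0 d x -> sqnorm x <= n%:R * d ^+ 2.
Proof.
move=> d0; elim: n x => [[]|n IH [y t]] /=; first by rewrite mul0r.
move=> [/IH hy]; rewrite /= in_itv /= => /andP [t0 td].
have : t ^+ 2 <= d ^+ 2 by nra.
rewrite -[n.+1]addn1 natrD; nra.
Qed.

Lemma boxN_sqnorm n d (x : RN R n) : 0 <= d -> sqnorm x <= d ^+ 2 -> boxN R n (- d) d x.
Proof.
move=> d0; elim: n x => [[]|n IH [y t]] //= h.
have hy := sqnorm_ge0 R n y.
split; first by apply: IH; nra.
rewrite /= in_itv /=; apply/andP; split; nra.
Qed.

End geom2.

Local Open Scope ereal_scope.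
Section lx.
Context (R : realType).

Lemma phi_scale (phi : \bar R -> \bar R) (s : \bar R) (l : R) : young phi ->
  0 <= s -> (0 <= l <= 1)%R -> phi (l%:E * s) <= l%:E * phi s.
Proof.
move=> [p0 [_ _ _ cv _]] s0 hl.
have := cv s 0 l s0 (lexx _) hl.
by rewrite mule0 adde0 p0 mule0 adde0.
Qed.

Lemma comb_inf (X : \bar R) (Sa Sb : set R) (K : R) : (0 < K)%R ->
  (forall a, Sa a -> (0 < a)%R) -> (forall b, Sb b -> (0 < b)%R) ->
  (forall a b, Sa a -> Sb b -> X <= (2 * a + K * b)%:E) ->
  X <= 2%:E * ereal_inf (EFin @` Sa) + K%:E * ereal_inf (EFin @` Sb).
Proof.
move=> K0 Sa0 Sb0 H.
have A0 : 0 <= ereal_inf (EFin @` Sa).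
  by apply: le_ereal_inf_tmp => _ [a /Sa0 a0 <-]; rewrite lee_fin ltW.
have B0 : 0 <= ereal_inf (EFin @` Sb).
  by apply: le_ereal_inf_tmp => _ [a /Sb0 a0 <-]; rewrite lee_fin ltW.
move: A0 B0; set A := ereal_inf _; set B := ereal_inf _.
move=> A0 B0.
have KB0 : 0 <= K%:E * B by rewrite mule_ge0 // lee_fin ltW.
have A20 : 0 <= 2%:E * A by rewrite mule_ge0 // lee_fin.
case Ae: A A0 A20 => [a0| |] // A0 A20; last first.
  rewrite mulry gtr0_sg // mul1e addye ?leey //.
  by rewrite gt_eqF // (lt_le_trans _ KB0) ?ltNy0.
case Be: B B0 KB0 => [b0| |] // B0 KB0; last first.
  rewrite mulry gtr0_sg // mul1e addey ?leey //.
rewrite lee_fin in A0; rewrite lee_fin in B0.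
apply/lee_addgt0Pr => e e0.
have e'0 : (0 < e / (2 + K))%R by rewrite divr_gt0 // addr_gt0.
have [_ [a Saa <-] ha] : exists2 y, (EFin @` Sa) y & y < (a0 + (e / (2 + K)))%:E.
  by apply: ereal_inf_lt; rewrite -/A Ae lte_fin ltrDl.
have [_ [b Sbb <-] hb] : exists2 y, (EFin @` Sb) y & y < (b0 + (e / (2 + K)))%:E.
  by apply: ereal_inf_lt; rewrite -/B Be lte_fin ltrDl.
apply: (le_trans (H a b Saa Sbb)).
rewrite -!EFinM -!EFinD lee_fin.
rewrite lte_fin in ha; rewrite lte_fin in hb.
have E : (e = (2 + K) * (e / (2 + K)))%R by rewrite mulrC divfK // gt_eqF // addr_gt0.
set e' := (e / (2 + K))%R in ha hb E e'0 *.
rewrite E; nra.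
Qed.

End lx.

Local Open Scope ring_scope.
Section meas.
Context (R : realType).

Lemma ball_meas n (r : R) : measurable [set x : RN R n | enorm x < r].
Proof.
have := measurable_enorm R n measurableT _ (measurable_itv `]-oo, r[).
rewrite setTI; congr measurable; apply/seteqP; split => x /=; by rewrite in_itv.
Qed.

Lemma ball_fin_pos n (r : R) : 0 < r ->
  exists m, lebN R n [set x | (enorm x < r)%R] = m%:E /\ 0 < m.
Proof.
move=> r0.
have up : (lebN R n [set x | (enorm x < r)%R] <= lebN R n (boxN R n (- r) r))%E.
  apply: le_measure; rewrite ?inE; [exact: ball_meas|exact: measurable_boxN|].
  move=> x /=; rewrite enorm_lt ?ltW // => h.
  by apply: boxN_sqnorm; rewrite ?ltW.
pose dl := r / (n%:R + 1).
have dl0 : 0 < dl by rewrite divr_gt0 // ltr_wpDl.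
have low : (lebN R n (boxN R n 0 dl) <= lebN R n [set x | (enorm x < r)%R])%E.
  apply: le_measure; rewrite ?inE; [exact: measurable_boxN|exact: ball_meas|].
  move=> x /= /(@sqnorm_boxN R n dl x (ltW dl0)) h; rewrite enorm_lt ?ltW //.
  apply: (le_lt_trans h).
  have -> : r = dl * (n%:R + 1) by rewrite /dl divfK // gt_eqF // ltr_wpDl.
  have n0 : 0 <= n%:R :> R by [].
  nra.
have nr : - r <= r by rewrite -subr_ge0 opprK addr_ge0 // ltW.
rewrite (@lebN_boxN R n _ _ (ltW dl0)) in low; rewrite (@lebN_boxN R n _ _ nr) in up.
move: low up; case: (lebN R n _) => [m| |] //= low up.
exists m; split => //.
rewrite lee_fin subr0 in low; apply: lt_le_trans low; exact: exprn_gt0.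
Qed.

Lemma annulus n (r : R) : (0 < n)%N -> 0 < r -> exists (S : set (RN R n)) (D : R),
  [/\ measurable S, lebN R n S = 1%:E &
      forall x, S x -> r <= enorm x /\ enorm x <= D].
Proof.
case: n => [//|n] _ r0.
exists (boxN R n 0 1 `*` `[r, r + 1]), (Num.sqrt (n%:R + (r + 1) ^+ 2)).
split.
- apply: measurableX; [exact: measurable_boxN|exact: measurable_itv].
- rewrite /= product_measure1E; [|exact: measurable_boxN|exact: measurable_itv].
  rewrite lebN_boxN // subr0 expr1n.
  have := @lebesgue_measure_itv R `[r, r + 1]; rewrite /= lte_fin ltrDl ltr01 => ->.
  by rewrite -EFinB addrAC subrr add0r mul1e.
- move=> [y t] [/= /(@sqnorm_boxN R n 1 y ler01) hy]; rewrite /= in_itv /= => /andP [rt tr].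
  have y0 := sqnorm_ge0 R n y.
  split.
    rewrite leNgt enorm_lt ?ltW //= ; apply/negP; nra.
  rewrite /enorm /=; apply: ler_wsqrtr.
  rewrite expr1n mulr1 in hy.
  have r1 : 0 <= r + 1 by rewrite addr_ge0 // ltW.
  nra.
Qed.

End meas.

Local Open Scope ereal_scope.
Section core.
Context (R : realType).

Lemma core n (phi : \bar R -> \bar R) (yphi : young phi) (B : set (RN R n))
  (mB : measurable B) (u hinv : RN R n -> \bar R) (K a b : R) :
  (0 < K)%R -> (0 < a)%R -> (0 < b)%R ->
  (forall x, ~ B x -> `|u x| <= 2%:E * `|hinv x|) ->
  (forall x, B x -> `|u x| <= K%:E) ->
  \int[lebN R n]_(x in ~` B) phi ((a^-1)%:E * `|hinv x|) <= 1 ->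
  \int[lebN R n]_(x in setT) phi ((b^-1)%:E * `|(\1_B x)%:E|) <= 1 ->
  \int[lebN R n]_(x in setT) phi (((2 * a + K * b)^-1)%:E * `|u x|) <= 1.
Proof.
move=> K0 a0 b0 hu1 hu2 Ia Ib.
have [p0 [_ pge0 pmono _ _]] := yphi.
set L := (2 * a + K * b)%R.
have L0 : (0 < L)%R by rewrite addr_gt0 // mulr_gt0.
set la := (2 * a / L)%R; set mu := (K * b / L)%R.
have la0 : (0 < la)%R by rewrite divr_gt0 // mulr_gt0.
have mu0 : (0 < mu)%R by rewrite divr_gt0 // mulr_gt0.
have lamu : (la + mu = 1)%R by rewrite /la /mu -mulrDl divff // gt_eqF.
have la1 : (0 <= la <= 1)%R by rewrite ltW //=; lra.
have mu1 : (0 <= mu <= 1)%R by rewrite ltW //=; lra.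
have arg0 (r : R) (y : \bar R) : (0 < r)%R -> 0 <= r%:E * `|y|.
  by move=> r0; rewrite mule_ge0 // lee_fin ltW.
apply: le_trans (@int_split _ _ R (lebN R n) (~` B) (measurableC mB)
  (fun x => phi ((L^-1)%:E * `|u x|))
  (fun x => phi ((a^-1)%:E * `|hinv x|))
  (fun x => phi ((b^-1)%:E * `|(\1_B x)%:E|)) la mu la0 mu0 _ _ _ _ _) _.
- by move=> x; apply: pge0; apply: arg0; rewrite invr_gt0.
- by move=> x _; apply: pge0; apply: arg0; rewrite invr_gt0.
- by move=> x _; apply: pge0; apply: arg0; rewrite invr_gt0.
- move=> x /= Bx.
  apply: (le_trans _ (@phi_scale R phi _ la yphi _ la1)); last by apply: arg0; rewrite invr_gt0.
  apply: pmono; first by apply: arg0; rewrite invr_gt0.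
  have -> : la%:E * ((a^-1)%:E * `|hinv x|) = (L^-1)%:E * (2%:E * `|hinv x|).
    rewrite !muleA -!EFinM; congr (_%:E * _); rewrite /la; field.
    by apply/andP; split; rewrite gt_eqF.
  by apply: lee_wpmul2l; [rewrite lee_fin invr_ge0 ltW|exact: hu1].
- move=> x Bx; have {}Bx : B x by apply: contrapT.
  apply: (le_trans _ (@phi_scale R phi _ mu yphi _ mu1)); last by apply: arg0; rewrite invr_gt0.
  apply: pmono; first by apply: arg0; rewrite invr_gt0.
  have -> : mu%:E * ((b^-1)%:E * `|(\1_B x)%:E|) = (L^-1)%:E * K%:E.
    rewrite indicE mem_set // abse1 mule1 -!EFinM; congr (_%:E); rewrite /mu; field.
    by apply/andP; split; rewrite gt_eqF.
  by apply: lee_wpmul2l; [rewrite lee_fin invr_ge0 ltW|exact: hu2].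
have I2 : \int[lebN R n]_(x in ~` ~` B) phi ((b^-1)%:E * `|(\1_B x)%:E|) <= 1.
  apply: le_trans Ib; apply: int_mono.
  - by move=> x _; apply: pge0; apply: arg0; rewrite invr_gt0.
  - by move=> x _; apply: pge0; apply: arg0; rewrite invr_gt0.
  - by move=> x _; split.
apply: le_trans (leeD (lee_wpmul2l _ Ia) (lee_wpmul2l _ I2)) _.
  by rewrite lee_fin ltW.
  by rewrite lee_fin ltW.
by rewrite !mule1 -EFinD lamu.
Qed.


Lemma lux_ge0 n (phi : \bar R -> \bar R) (E : set (RN R n)) k : 0 <= lux phi E k.
Proof. by apply: le_ereal_inf_tmp => _ [r [r0 _] <-]; rewrite lee_fin ltW. Qed.

Lemma lux_le n (phi : \bar R -> \bar R) (E : set (RN R n)) k (r : R) : (0 < r)%R ->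
  \int[lebN R n]_(x in E) phi ((r^-1)%:E * `|k x|) <= 1 -> lux phi E k <= r%:E.
Proof. by move=> r0 hr; apply: ereal_inf_lbound; exists r. Qed.

Lemma int_ind n (phi : \bar R -> \bar R) (yphi : young phi) (B : set (RN R n))
  (mB : measurable B) (r : R) :
  \int[lebN R n]_(x in setT) phi ((r^-1)%:E * `|(\1_B x)%:E|) = phi (r^-1)%:E * lebN R n B.
Proof.
have [p0 _] := yphi.
rewrite -integral_cst // [RHS]integral_mkcond; apply: eq_integral => x _.
rewrite /patch indicE; case: (x \in B) => /=.
  by rewrite normr1 mule1.
by rewrite normr0 mule0 p0.
Qed.


Lemma lux_ind_le n (phi psi : \bar R -> \bar R) (yphi : young phi) (B : set (RN R n))
  (mB : measurable B) (m0 : R) : lebN R n B = m0%:E -> (0 < m0)%R ->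
  (forall t, 0 <= t -> 0 <= psi t /\ phi (psi t) = t) ->
  lux phi setT (fun x => (\1_B x)%:E) <= einv (psi (einv (lebN R n B))).
Proof.
move=> hM m00 hpsi.
have [p0 [_ pge0 pmono _ _]] := yphi.
rewrite hM /= ifN ?gt_eqF //.
have := hpsi (m0^-1)%:E; rewrite lee_fin invr_ge0 ltW // => /(_ isT) [].
case: (psi _) => [w| |] //= w0 pw.
  have wn0 : w != 0%R by apply/eqP => w0'; move: pw; rewrite w0' p0 => /eqP; rewrite eq_sym eqe invr_eq0 gt_eqF.
  rewrite (negbTE wn0); apply: lux_le; first by rewrite invr_gt0 lt_neqAle eq_sym wn0 -lee_fin.
  by rewrite int_ind // invrK pw hM -EFinM mulVf ?gt_eqF.
apply/lee_addgt0Pr => e e0; rewrite add0e; apply: lux_le => //.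
rewrite int_ind // hM; apply: le_trans (lee_wpmul2r _ (pmono _ +oo _ (leey _))) _.
- by rewrite lee_fin ltW.
- by rewrite lee_fin invr_ge0 ltW.
- by rewrite pw -EFinM mulVf ?gt_eqF.
Qed.

Lemma lux_ind_fin n (phi : \bar R -> \bar R) (yphi : young phi) (B : set (RN R n))
  (mB : measurable B) (m0 t0 : R) : lebN R n B = m0%:E -> (0 < m0)%R -> (0 < t0)%R ->
  phi t0%:E <= 1 ->
  exists b, (0 < b)%R /\ \int[lebN R n]_(x in setT) phi ((b^-1)%:E * `|(\1_B x)%:E|) <= 1.
Proof.
move=> hM m00 t00 pt.
have [p0 [_ pge0 pmono _ _]] := yphi.
set ep := ((1 + m0)^-1)%R.
have ep0 : (0 < ep)%R by rewrite invr_gt0 addr_gt0.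
have ep1 : (0 <= ep <= 1)%R by rewrite ltW //= invr_le1 ?unitfE ?gt_eqF ?addr_gt0 // lerDl ltW.
exists ((ep * t0)^-1)%R; split; first by rewrite invr_gt0 mulr_gt0.
rewrite int_ind // invrK hM EFinM.
apply: le_trans (lee_wpmul2r _ (@phi_scale R phi _ ep yphi _ ep1)) _.
- by rewrite lee_fin ltW.
- by rewrite lee_fin ltW.
apply: le_trans (lee_wpmul2r _ (lee_wpmul2l _ pt)) _.
- by rewrite lee_fin ltW.
- by rewrite lee_fin ltW.
rewrite mule1 -EFinM lee_fin /ep.
rewrite ler_pdivrMl ?addr_gt0 // mulr1 lerDr //.
Qed.

Lemma annulus_phi n (phi : \bar R -> \bar R) (yphi : young phi) (c alpha r a : R) :
  (0 < n)%N -> (0 < c)%R -> (0 < alpha)%R -> (0 < r)%R -> (0 < a)%R ->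
  \int[lebN R n]_(x in ~` [set x | (enorm x < r)%R])
     phi ((a^-1)%:E * `|einv (c * enorm x `^ alpha)%:E|) <= 1 ->
  exists t0, (0 < t0)%R /\ phi t0%:E <= 1.
Proof.
move=> n0 c0 al0 r0 a0 Ia.
have [p0 [_ pge0 pmono _ _]] := yphi.
have [S [D [mS hS hSx]]] := @annulus R n r n0 r0.
have [x0 Sx0] : exists x, S x.
  apply: contrapT => hn.
  have S0 : S = set0 by apply/seteqP; split => x // Sx; apply: hn; exists x.
  by move: hS; rewrite S0 measure0 => /(congr1 fine) /= /eqP; rewrite eq_sym oner_eq0.
have rD : (r <= D)%R by case: (hSx x0 Sx0) => h1 h2; exact: le_trans h2.
have D0 : (0 < D)%R by exact: lt_le_trans rD.
have hD0 : (0 < c * D `^ alpha)%R by rewrite mulr_gt0 // powR_gt0.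
exists (a^-1 * (c * D `^ alpha)^-1)%R; split.
  by rewrite mulr_gt0 // invr_gt0.
apply: le_trans Ia.
have := @int_mono _ _ R (lebN R n) S (~` [set x | (enorm x < r)%R])
  (cst (phi (a^-1 * (c * D `^ alpha)^-1)%R%:E))
  (fun x => phi ((a^-1)%:E * `|einv (c * enorm x `^ alpha)%:E|)).
rewrite integral_cst // hS mule1; apply.
- by move=> x _; apply: pge0; rewrite lee_fin mulr_ge0 // invr_ge0 ltW.
- by move=> x _; apply: pge0; rewrite mule_ge0 // lee_fin invr_ge0 ltW.
move=> x Sx; have [h1 h2] := hSx x Sx.
have ex0 : (0 < enorm x)%R by exact: lt_le_trans h1.
have hx0 : (0 < c * enorm x `^ alpha)%R by rewrite mulr_gt0 // powR_gt0.
split; first by move=> /= h; move: h1; rewrite leNgt h.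
apply: pmono; first by rewrite lee_fin mulr_ge0 // invr_ge0 ltW.
rewrite /einv ifN ?gt_eqF //.
rewrite gee0_abs; last by rewrite lee_fin invr_ge0 ltW.
rewrite -EFinM lee_fin.
rewrite ler_pM2l ?invr_gt0 //.
rewrite lef_pV2 ?posrE // ler_pM2l //.
apply: ge0_ler_powR => //; [exact: ltW|rewrite nnegrE; exact: ltW|rewrite nnegrE; exact: ltW]. 
Qed.

End core.

Local Open Scope classical_set_scope.
Local Open Scope ring_scope.
Local Open Scope ereal_scope.

Theorem lemma21 (R : realType) (N : nat) (hN : (0 < N)%N)
  (f : RN R N -> \bar R) (hf : forall x, f x <> -oo)
  (hmf : -oo < ereal_inf (range f))
  (c alpha : R) (hc : (0 < c)%R) (halpha : (0 < alpha)%R) :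
  let h : RN R N -> R := fun x => (c * enorm x `^ alpha)%R in
  (exists R0 : R, forall x, (R0 <= enorm x)%R -> (h x)%:E <= f x) ->
  let mf := ereal_inf (range f) in
  forall (z r : R), z%:E < mf -> (0 < r)%R ->
  let B : set (RN R N) := [set x | (enorm x < r)%R] in
  (forall x, ~ B x -> (h x)%:E <= f x /\ (2 * z <= h x)%R) ->
  forall phi : \bar R -> \bar R, young phi ->
  let lhs := lux phi setT (fun x => einv (fcheck f x - z%:E)) in
  let hnorm := lux phi (~` B) (fun x => einv (h x)%:E) in
  [/\ lhs <= 2%:E * hnorm
              + einv (mf - z%:E) * lux phi setT (fun x => (\1_B x)%:E),
      (forall psi : \bar R -> \bar R,
         (forall t, 0 <= t -> 0 <= psi t /\ phi (psi t) = t) ->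
         (forall s, 0 <= s -> psi (phi s) = s) ->
         lhs <= 2%:E * hnorm
                + einv (mf - z%:E) * einv (psi (einv (lebN R N B))))
    & (hnorm < +oo -> lhs < +oo)].
Proof.
move=> h hex mf z r zmf r0 B hB phi yphi lhs hnorm.
have [p0 [_ pge0 pmono _ _]] := yphi.
have mB : measurable B by exact: ball_meas.
have F1 : forall x, mf <= fcheck f x by move=> x; exact: fcheck_ge_mf.
have F2 : forall x, ~ B x -> (h x)%:E <= fcheck f x.
  move=> x Bx; apply: (@fcheck_ge_h R N f c alpha r x) => //.
  - by move=> y ny; case: (hB y ny).
  - by rewrite leNgt; apply/negP.
have hpos : forall x, ~ B x -> (0 < h x)%R.
  move=> x Bx; rewrite mulr_gt0 // powR_gt0 //; apply: lt_le_trans r0 _.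
  by rewrite leNgt; apply/negP.
have hn0 : 0 <= hnorm by exact: lux_ge0.
have l0 : 0 <= lux phi setT (fun x => (\1_B x)%:E) by exact: lux_ge0.
have Emf : mf = ereal_inf (range f) by [].
rewrite -Emf in hmf; clearbody mf.
case: mf Emf hmf zmf F1 => [m| |] Emf hmf zmf F1; last by rewrite ltxx in hmf.
2:{
  have u0 : forall x, einv (fcheck f x - z%:E) = 0.
    by move=> x; have := F1 x; rewrite leye_eq => /eqP ->.
  have lhs0 : lhs <= 0.
    apply/lee_addgt0Pr => e e0; rewrite add0e; apply: lux_le => //.
    rewrite (eq_integral (cst 0)) ?integral0 // => x _.
    by rewrite u0 abse0 mule0 p0.
  have -> : einv (+oo - z%:E) = 0 by [].
  rewrite !mul0e !adde0.
  have h0 : 0 <= 2%:E * hnorm by rewrite mule_ge0.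
  split.
  - exact: le_trans lhs0 h0.
  - by move=> psi _ _; rewrite mul0e adde0; exact: le_trans lhs0 h0.
  - by move=> _; exact: le_lt_trans lhs0 (ltry 0).
}
have zm : (z < m)%R by rewrite lte_fin in zmf.
set K := ((m - z)^-1)%R.
have K0 : (0 < K)%R by rewrite invr_gt0 subr_gt0.
have EK : einv (m%:E - z%:E) = K%:E by rewrite -EFinB /einv ifN // gt_eqF // subr_gt0.
rewrite EK.
have hu1 : forall x, ~ B x ->
    `|einv (fcheck f x - z%:E)| <= 2%:E * `|einv (h x)%:E|.
  move=> x Bx; have hx := hpos x Bx; have [_ h2z] := hB x Bx.
  rewrite {2}/einv ifN ?gt_eqF //.
  rewrite [X in _ <= _ * X]gee0_abs; last by rewrite lee_fin invr_ge0 ltW.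
  have := F2 x Bx; case: (fcheck f x) => [w| |] //= hw.
    rewrite lee_fin in hw.
    have wz : (0 < w - z)%R by lra.
    rewrite /einv ifN ?gt_eqF //.
    rewrite gee0_abs; last by rewrite lee_fin invr_ge0 ltW.
    rewrite -EFinM lee_fin.
    have -> : (2 * (h x)^-1 = (h x / 2)^-1)%R by rewrite invf_div mulrC.
    rewrite lef_pV2 ?posrE //; first lra.
    by rewrite divr_gt0.
  by rewrite normr0 mule_ge0 // lee_fin invr_ge0 ltW.
have hu2 : forall x, B x -> `|einv (fcheck f x - z%:E)| <= K%:E.
  move=> x Bx; have := F1 x; case: (fcheck f x) => [w| |] //= hw.
    rewrite lee_fin in hw.
    have wz : (0 < w - z)%R by lra.
    rewrite /einv ifN ?gt_eqF //.
    rewrite gee0_abs; last by rewrite lee_fin invr_ge0 ltW.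
    rewrite lee_fin /K lef_pV2 ?posrE ?subr_gt0 //; lra.
  by rewrite normr0 lee_fin ltW.
have core' : forall a b : R,
    (0 < a)%R /\ \int[lebN R N]_(x in ~` B) phi ((a^-1)%:E * `|einv (h x)%:E|) <= 1 ->
    (0 < b)%R /\ \int[lebN R N]_(x in setT) phi ((b^-1)%:E * `|(\1_B x)%:E|) <= 1 ->
    lhs <= (2 * a + K * b)%:E.
  move=> a b [a0 Ia] [b0 Ib]; apply: lux_le.
    by rewrite addr_gt0 // mulr_gt0.
  exact: (@core R N phi yphi B mB _ _ K a b K0 a0 b0 hu1 hu2 Ia Ib).
have P1 : lhs <= 2%:E * hnorm + K%:E * lux phi setT (fun x => (\1_B x)%:E).
  apply: comb_inf => //.
  - by move=> a [].
  - by move=> b [].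
have [m0 [hM m00]] := ball_fin_pos R N r r0.
split => //.
- move=> psi hpsi _; apply: le_trans P1 _; apply: leeD2l; apply: lee_wpmul2l.
    by rewrite lee_fin ltW.
  exact: (@lux_ind_le R N phi psi yphi B mB m0 hM m00 hpsi).
- move=> hfin.
  have [_ [a [a0 Ia] <-] _] := ereal_inf_lt hfin.
  have [t0 [t00 pt]] := @annulus_phi R N phi yphi c alpha r a hN hc halpha r0 a0 Ia.
  have [b [b0 Ib]] := @lux_ind_fin R N phi yphi B mB m0 t0 hM m00 t00 pt.
  exact: le_lt_trans (core' a b (conj a0 Ia) (conj b0 Ib)) (ltry _).
Qed.
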